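(* The class of Subgraph MPNNs cannot count $8$-cycles at graph level, and cannot count $8$-paths at graph level. That is, there exist graphs $G_1,G_2$ with $C(8\text{-cycle},G_1)\neq C(8\text{-cycle},G_2)$ such that $h_{G_1}=h_{G_2}$ for every Subgraph MPNN, and there exist graphs $G_1,G_2$ with $C(8\text{-path},G_1)\neq C(8\text{-path},G_2)$ such that $h_{G_1}=h_{G_2}$ for every Subgraph MPNN.
   Context: Graphs are finite, simple, undirected, $G=(V,E)$, possibly carrying node attributes $x_v$ and edge attributes $e_{u,v}$ (a fixed constant when absent). $N(v)$ is the neighbour set of $v$. For $L\ge 1$, an $L$-path is a sequence of edges $(v_1,v_2),(v_2,v_3),\dots,(v_L,v_{L+1})$ of $G$ with $v_1,\dots,v_{L+1}$ pairwise distinct; for $L\ge 3$, an $L$-cycle is such a sequence with $v_1,\dots,v_L$ pairwise distinct and $v_{L+1}=v_1$. Two paths (resp. cycles) are identified when their edge sets coincide. $C(L\text{-cycle},G)$ and $C(L\text{-path},G)$ denote the numbers of inequivalent $L$-cycles and $L$-paths of $G$. A class $\mathcal F$ of functions on graphs can count a substructure $S$ at graph level if for all graphs $G_1,G_2$ with $C(S,G_1)\ne C(S,G_2)$ there is $f\in\mathcal F$ with $f(G_1)\neq f(G_2)$. Subgraph MPNNs. A Subgraph MPNN is specified by: (1) a subgraph extraction rule, either node deletion, $(V_i,E_i)=(V\setminus\{i\},E\setminus\{(i,j):j\in N(i)\})$, or the $K$-hop ego-network for some integer $K\ge1$, i.e. $(V_i,E_i)$ is the subgraph of $G$ induced by the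 nodes at shortest-path distance at most $K$ from $i$; (2) a node labeling $z_{i,j}$, which is either absent, identity labeling $z_{i,j}=\mathbb 1_{i=j}$, or shortest path distance $z_{i,j}=\mathrm{spd}(i,j)$ in $G$; (3) a number of layers $T$ and arbitrary functions $M_t$ (with values in some $\mathbb R^{d_t}$) and $U_t$, $t=0,\dots,T-1$; (4) arbitrary readout functions $R_{\text{node}},R_{\text{graph}}$ on finite multisets. For each root $i\in V$ and $j\in V_i$: $h^{(0)}_{i,j}=x_j\oplus z_{i,j}$ ($\oplus$ = concatenation), $h^{(t+1)}_{i,j}=U_t\big(h^{(t)}_{i,j},\sum_{k\in N_i(j)}M_t(h^{(t)}_{i,j},h^{(t)}_{i,k},e_{j,k})\big)$ where $N_i(j)=\{k\in V_i:(j,k)\in E_i\}$; then $h_i=R_{\text{node}}(\{\!\{h^{(T)}_{i,j}:j\in V_i\}\!\})$ and $h_G=R_{\text{graph}}(\{\!\{h_i:i\in V\}\!\})$. The graph-level function computed is $G\mapsto h_G$, and the class of Subgraph MPNNs consists of all such choices. *)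

(* Defs.v *)
From HB Require Import structures.
From mathcomp Require Import all_boot all_order all_algebra.
From mathcomp Require Import reals.
Set Implicit Arguments. Unset Strict Implicit. Unset Printing Implicit Defensive.
Import Order.TTheory GRing.Theory Num.Theory.
Local Open Scope ring_scope.

Record graph := Graph {
  gV :> finType;
  gadj : rel gV;
  gadj_sym : symmetric gadj;
  gadj_irr : irreflexive gadj }.

Section GraphDefs.
Variable G : graph.

Fixpoint within (n : nat) (i j : G) : bool :=
  if n is n'.+1 then
    within n' i j || [exists k : G, within n' i k && @gadj G k j]
  else i == j.

(* Shortest path distance in G: [Some d], or [None] if unreachable.
   (Any reachable vertex is at distance < #|G|.) *)
Definition spd (i j : G) : option nat :=
  let d := find (fun n => within n i j) (iota 0 #|G|) in
  if (d < #|G|)%N then Some d else None.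

Definition path_edges (s : seq G) : {set {set G}} :=
  [set [set p.1; p.2] | p in zip s (behead s)].
Definition cycle_edges (s : seq G) : {set {set G}} :=
  [set [set p.1; p.2] | p in zip s (rot 1 s)].

Definition is_path_seq (L : nat) (s : seq G) : bool :=
  [&& (1 <= L)%N, size s == L.+1, uniq s &
      (if s is x :: p then path (@gadj G) x p else false)].
Definition is_cycle_seq (L : nat) (s : seq G) : bool :=
  [&& (3 <= L)%N, size s == L, uniq s & cycle (@gadj G) s].

(* Number of inequivalent L-paths / L-cycles (identified by edge sets). *)
Definition count_paths (L : nat) : nat :=
  #|[set path_edges (val s) | s in [pred s : L.+1.-tuple G | is_path_seq L s]]|.
Definition count_cycles (L : nat) : nat :=
  #|[set cycle_edges (val s) | s in [pred s : L.-tuple G | is_cycle_seq L s]]|.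

End GraphDefs.

Inductive extraction := NodeDeletion | EgoNet of nat (* K-hop, K >= 1 *).
Inductive labeling := NoLabel | IdLabel | SpdLabel.

(* dimension of the initial feature h^(0) = x_j (+) z_{i,j};
   node attributes are absent, so h^(0) = z_{i,j}. *)
Definition labdim (l : labeling) : nat :=
  match l with NoLabel => 0%N | IdLabel => 1%N | SpdLabel => 1%N end.

Section MPNN.
Variable R : realType.

Definition sdim (l : labeling) (edim : nat -> nat) (t : nat) : nat :=
  if t is t'.+1 then edim t' else labdim l.

Record mpnn := MPNN {
  rule : extraction;
  lab : labeling;
  nlayers : nat;
  edim : nat -> nat;                   (* dimension of h^(t+1) *)
  mdim : nat -> nat;
  Msg : forall t, 'rV[R]_(sdim lab edim t) -> 'rV[R]_(sdim lab edim t) ->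
                  'rV[R]_(mdim t);
  Upd : forall t, 'rV[R]_(sdim lab edim t) -> 'rV[R]_(mdim t) ->
                  'rV[R]_(sdim lab edim t.+1);
  ndim : nat;
  Rnode : seq 'rV[R]_(sdim lab edim nlayers) -> 'rV[R]_ndim;
  Rnode_multiset : forall s1 s2, perm_eq s1 s2 -> Rnode s1 = Rnode s2;
  gdim : nat;
  Rgraph : seq 'rV[R]_ndim -> 'rV[R]_gdim;
  Rgraph_multiset : forall s1 s2, perm_eq s1 s2 -> Rgraph s1 = Rgraph s2 }.

Definition valid_mpnn (m : mpnn) : Prop :=
  match rule m with NodeDeletion => True | EgoNet K => (1 <= K)%N end.

Variable m : mpnn.
Variable G : graph.

Definition in_sub (i j : G) : bool :=
  match rule m with
  | NodeDeletion => j != i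
  | EgoNet K => within K i j
  end.

(* k is in N_i(j): k in V_i and (j,k) in E_i (E_i is induced on V_i in both
   rules; for node deletion this removes exactly the edges incident to i). *)
Definition sub_nbr (i j k : G) : bool := in_sub i j && in_sub i k && @gadj G j k.

Definition zlabel (i j : G) : 'rV[R]_(labdim (lab m)) :=
  match lab m as l return 'rV[R]_(labdim l) with
  | NoLabel => 0
  | IdLabel => const_mx (if i == j then 1 else 0)
  | SpdLabel => const_mx (match spd i j with Some d => d%:R | None => -1 end)
  end.

Fixpoint hstate (t : nat) : G -> G -> 'rV[R]_(sdim (lab m) (edim m) t) :=
  match t as t0 return G -> G -> 'rV[R]_(sdim (lab m) (edim m) t0) with
  | 0%N => fun i j => zlabel i j
  | t'.+1 => fun i j =>
      @Upd m t' (hstate t' i j)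
        (\sum_(k : G | sub_nbr i j k) @Msg m t' (hstate t' i j) (hstate t' i k))
  end.

Definition hnode (i : G) : 'rV[R]_(ndim m) :=
  @Rnode m [seq hstate (nlayers m) i j | j <- enum [pred j | in_sub i j]].

Definition hgraph : 'rV[R]_(gdim m) :=
  @Rgraph m [seq hnode i | i <- enum G].

End MPNN.

(* Main.v *)
Require Import Defs.
From HB Require Import structures.
From mathcomp Require Import all_boot all_order all_algebra.
From mathcomp Require Import reals.
From mathcomp Require Import zify.
Set Implicit Arguments. Unset Strict Implicit. Unset Printing Implicit Defensive.

Lemma nth_rotE (T : Type) (x0 : T) (s : seq T) n i : n <= size s -> i < size s ->
  nth x0 (rot n s) i = nth x0 s ((i + n) %% size s).
Proof.
move=> hn hi; rewrite /rot nth_cat size_drop.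
case: ifP => h.
  rewrite nth_drop; congr nth; rewrite modn_small; lia.
rewrite nth_take; last lia.
congr nth. have -> : i + n = 1 * size s + (i - (size s - n)) by lia.
rewrite modnMDl modn_small //; lia.
Qed.

Section S2.
Variable T : finType.
Lemma set2_eqE (x y z w : T) : [set x; y] = [set z; w] ->
  (x = z /\ y = w) \/ (x = w /\ y = z).
Proof.
move=> E.
have hx : x \in [set z; w] by rewrite -E set21.
have hy : y \in [set z; w] by rewrite -E set22.
have hz : z \in [set x; y] by rewrite E set21.
have hw : w \in [set x; y] by rewrite E set22.
case/set2P: hx => ?; case/set2P: hy => ?; subst; try tauto;
case/set2P: hz => ?; case/set2P: hw => ?; subst; tauto.
Qed.
End S2.

Section Edges.
Variable G : graph.
Implicit Types s t : seq G.

Lemma mem_peP s x0 E : reflect (exists2 m, m.+1 < size s & E = [set nth x0 s m; nth x0 s m.+1])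
  (E \in path_edges s).
Proof.
rewrite /path_edges; apply: (iffP imsetP).
  case=> p /(nthP (x0, x0)) [i hi <-] ->.
  move: hi; rewrite size_zip size_behead -subn1 => hi.
  exists i; first (move: hi; set k := size s; move=> hi; lia).
  by rewrite nth_zip_cond size_zip size_behead -subn1 hi /= nth_behead.
case=> m hm ->; exists (nth x0 s m, nth x0 s m.+1) => //.
have hm' : m < size (zip s (behead s)).
  rewrite size_zip size_behead -subn1; set k := size s; move: hm; rewrite -/k; lia.
apply/(nthP (x0, x0)); exists m => //.
by rewrite nth_zip_cond hm' /= ?nth_behead.
Qed.

Lemma mem_ceP s x0 E : reflect (exists2 m, m < size s & E = [set nth x0 s m; nth x0 s ((m + 1) %% size s)])
  (E \in cycle_edges s).
Proof.
rewrite /cycle_edges; apply: (iffP imsetP).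
  case=> p /(nthP (x0, x0)) [i hi <-] ->.
  move: hi; rewrite size_zip size_rot minnn => hi.
  exists i => //.
  rewrite nth_zip ?size_rot //= nth_rotE //; set k := size s; move: hi; rewrite -/k; lia.
case=> m hm ->; exists (nth x0 s m, nth x0 s ((m + 1) %% size s)) => //.
apply/(nthP (x0, x0)); exists m; first by rewrite size_zip size_rot minnn.
rewrite nth_zip ?size_rot //= nth_rotE //; set k := size s; move: hm; rewrite -/k; lia.
Qed.

End Edges.

Lemma nth_inj (T : eqType) (s : seq T) x0 i j : uniq s -> i < size s -> j < size s ->
  nth x0 s i = nth x0 s j -> i = j.
Proof. by move=> us hi hj E; apply/eqP; rewrite -(nth_uniq x0 hi hj us) E. Qed.

Section Forward.
Variable G : graph.
Implicit Types s t : seq G.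

Lemma pe_forward s t x0 a : uniq s -> uniq t ->
  (forall j, j.+1 < size t -> [set nth x0 t j; nth x0 t j.+1] \in path_edges s) ->
  a.+1 < size s -> nth x0 t 0 = nth x0 s a -> nth x0 t 1 = nth x0 s a.+1 ->
  forall j, j < size t -> a + j < size s /\ nth x0 t j = nth x0 s (a + j).
Proof.
move=> us ut he ha h0 h1.
have key : forall j, j.+1 < size t ->
  [/\ a + j.+1 < size s, nth x0 t j = nth x0 s (a + j) & nth x0 t j.+1 = nth x0 s (a + j.+1)].
  elim=> [|j IH] hj.
    by rewrite addn0 addn1 h0 h1.
  have [hs1 Ej Ej1] := IH (ltnW hj).
  have /(mem_peP _ x0) [m hm /set2_eqE] := he _ hj.
  case=> [[A B]|[A B]].
    have am : a + j.+1 = m.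
      apply: (@nth_inj _ _ x0 _ _ us hs1 (ltnW hm)); by rewrite -Ej1 A.
    split; [move: hm; rewrite -am; set k := size s; lia | exact: Ej1 | rewrite B -am; congr nth; by rewrite !addnS].
  have am2 : a + j.+1 = m.+1.
    by apply: (@nth_inj _ _ x0 _ _ us) => //; rewrite -Ej1 A.
  have : nth x0 t j.+2 = nth x0 t j by rewrite B Ej; congr nth; lia.
  move/(@nth_inj _ _ x0 _ _ ut) => /(_ hj); move/(_ (ltnW (ltnW hj))) => /eqP.
  by rewrite -[j.+2]addn2 -{2}[j]addn0 eqn_add2l.
move=> j hj; case: j hj => [|j] hj; first by rewrite addn0 h0; split => //; lia.
by have [? ? ?] := key j hj.
Qed.

Lemma ce_forward s t x0 a : uniq s -> uniq t -> size t = size s ->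
  (forall j, j.+1 < size t -> [set nth x0 t j; nth x0 t j.+1] \in cycle_edges s) ->
  a < size s -> nth x0 t 0 = nth x0 s a -> nth x0 t 1 = nth x0 s ((a + 1) %% size s) ->
  forall j, j < size t -> nth x0 t j = nth x0 s ((a + j) %% size s).
Proof.
move=> us ut st he ha h0 h1.
set L := size s in ha h1 st *.
have L0 : 0 < L by lia.
have key : forall j, j.+1 < size t ->
  nth x0 t j = nth x0 s ((a + j) %% L) /\ nth x0 t j.+1 = nth x0 s ((a + j.+1) %% L).
  elim=> [|j IH] hj.
    by rewrite addn0 h0 h1 modn_small.
  have [Ej Ej1] := IH (ltnW hj).
  have /(mem_ceP _ x0) [m hm /set2_eqE] := he _ hj.
  rewrite -/L; case=> [[A B]|[A B]].
    have am : (a + j.+1) %% L = m.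
      apply: (@nth_inj _ _ x0 _ _ us) => //; [by rewrite ltn_mod | by rewrite -Ej1 A].
    split; first exact: Ej1.
    by rewrite B -am modnDml -[a + j.+1 + 1]addnA addn1.
  have am2 : (a + j.+1) %% L = (m + 1) %% L.
    by apply: (@nth_inj _ _ x0 _ _ us) => //; rewrite ?ltn_mod // -Ej1 A.
  have : nth x0 t j.+2 = nth x0 t j.
    rewrite B Ej; congr nth.
    have hmL : m < L := hm.
    have : (a + j + 1) %% L = (m + 1) %% L by rewrite -am2 addn1 addnS.
    by move/eqP; rewrite eqn_modDr (modn_small hmL) => /eqP.
  move/(@nth_inj _ _ x0 _ _ ut) => /(_ hj); move/(_ (ltnW (ltnW hj))) => /eqP.
  by rewrite -[j.+2]addn2 -{2}[j]addn0 eqn_add2l.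
move=> j hj; case: j hj => [|j] hj; first by rewrite addn0 h0 modn_small.
by have [? ?] := key j hj.
Qed.

End Forward.

Section Inv.
Variable G : graph.
Implicit Types s t : seq G.

Lemma pe_rev_sub s : {subset path_edges (rev s) <= path_edges s}.
Proof.
case: s => [|x0 s'] E; first by rewrite /path_edges /= => /imsetP [].
set s := x0 :: s'.
case/(mem_peP _ x0) => m; rewrite size_rev => hm ->.
apply/(mem_peP _ x0); exists (size s - m.+2); first lia.
rewrite !nth_rev ?size_rev; try lia.
rewrite setUC; congr [set nth x0 s _; nth x0 s _]; lia.
Qed.

Lemma pe_rev s : path_edges (rev s) = path_edges s.
Proof.
apply/setP => E; apply/idP/idP; first exact: pe_rev_sub.
by rewrite -{1}(revK s); apply: pe_rev_sub.
Qed.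

Lemma ce_rev_sub s : {subset cycle_edges (rev s) <= cycle_edges s}.
Proof.
case: s => [|x0 s'] E; first by rewrite /cycle_edges /= => /imsetP [].
set s := x0 :: s'.
have L0 : 0 < size s by [].
case/(mem_ceP _ x0) => m; rewrite size_rev => hm ->.
apply/(mem_ceP _ x0).
have [hlt|heq] : m.+1 < size s \/ m.+1 = size s by lia.
  exists (size s - m.+2); first lia.
  rewrite !nth_rev ?size_rev ?ltn_mod //.
  rewrite setUC; congr [set nth x0 s _; nth x0 s _].
    by rewrite modn_small; lia.
  rewrite (@modn_small (size s - m.+2 + 1)); last lia.
  lia.
exists (size s - 1); first lia.
rewrite !nth_rev ?size_rev ?ltn_mod //.
rewrite setUC; congr [set nth x0 s _; nth x0 s _].
  rewrite addn1 heq modnn; lia.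
have -> : size s - 1 + 1 = size s by lia.
rewrite modnn; lia.
Qed.

Lemma ce_rev s : cycle_edges (rev s) = cycle_edges s.
Proof.
apply/setP => E; apply/idP/idP; first exact: ce_rev_sub.
by rewrite -{1}(revK s); apply: ce_rev_sub.
Qed.

Lemma ce_rot_sub s a : a <= size s -> {subset cycle_edges (rot a s) <= cycle_edges s}.
Proof.
case: s => [|x0 s'] ha E; first by rewrite /cycle_edges /= => /imsetP [].
set s := x0 :: s' in ha *.
have L0 : 0 < size s by [].
case/(mem_ceP _ x0) => m; rewrite size_rot => hm ->.
apply/(mem_ceP _ x0); exists ((m + a) %% size s); first by rewrite ltn_mod.
rewrite !nth_rotE ?ltn_mod //; congr [set nth x0 s _; nth x0 s _].
by rewrite !modnDml addnAC.
Qed.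

Lemma ce_rot s a : a <= size s -> cycle_edges (rot a s) = cycle_edges s.
Proof.
move=> ha; apply/setP => E; apply/idP/idP; first exact: ce_rot_sub.
rewrite -{1}(rotK a s) /rotr; apply: ce_rot_sub.
by rewrite size_rot leq_subr.
Qed.
End Inv.

Section Fiber.
Variable G : graph.
Implicit Types s t : seq G.

Lemma pe_fiber s t : 1 < size s -> size t = size s -> uniq s -> uniq t ->
  path_edges t = path_edges s -> t = s \/ t = rev s.
Proof.
case: s => [//|x0 s'] hs st us ut E; set s := x0 :: s' in hs st us ut E *.
have hin : forall j, j.+1 < size t -> [set nth x0 t j; nth x0 t j.+1] \in path_edges s.
  by move=> j hj; rewrite -E; apply/(mem_peP _ x0); exists j.
have /(mem_peP _ x0) [m hm /set2_eqE] := hin 0 (ltac:(rewrite st; exact: hs)).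
case=> [[A B]|[A B]].
  have F := pe_forward us ut hin hm A B.
  have [hL _] := F (size s).-1 (ltac:(rewrite st; lia)).
  have m0 : m = 0 by move: hL; set k := size s; lia.
  subst m; left; apply: (eq_from_nth (x0 := x0)) => // j hj.
  by have [_ ->] := F j hj.
right.
set r := rev s.
have ur : uniq r by rewrite rev_uniq.
have hin' : forall j, j.+1 < size t -> [set nth x0 t j; nth x0 t j.+1] \in path_edges r.
  by move=> j hj; rewrite pe_rev; apply: hin.
have sr : size r = size s by rewrite size_rev.
have ha : (size s - m.+2).+1 < size r by rewrite sr; move: hm; set k := size s; lia.
have A' : nth x0 t 0 = nth x0 r (size s - m.+2).
  rewrite A nth_rev; last by move: hm; set k := size s; lia.
  congr nth; move: hm; set k := size s; lia.
have B' : nth x0 t 1 = nth x0 r (size s - m.+2).+1.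
  rewrite B nth_rev; last by move: hm; set k := size s; lia.
  congr nth; move: hm; set k := size s; lia.
have F := pe_forward ur ut hin' ha A' B'.
have [hL _] := F (size s).-1 (ltac:(rewrite st; lia)).
have m0 : size s - m.+2 = 0 by move: hL; rewrite sr; set k := size s; lia.
apply: (eq_from_nth (x0 := x0)); first by rewrite sr.
move=> j hj; have [_ ->] := F j hj; by rewrite m0.
Qed.

Lemma ce_fiber s t : 2 < size s -> size t = size s -> uniq s -> uniq t ->
  cycle_edges t = cycle_edges s ->
  exists2 a, a < size s & (t = rot a s \/ t = rot a (rev s)).
Proof.
case: s => [//|x0 s'] hs st us ut E; set s := x0 :: s' in hs st us ut E *.
set L := size s in hs st *.
have hin : forall j, j.+1 < size t -> [set nth x0 t j; nth x0 t j.+1] \in cycle_edges s.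
  move=> j hj; rewrite -E; apply/(mem_ceP _ x0); exists j; first lia.
  by rewrite st modn_small ?addn1 //; lia.
have /(mem_ceP _ x0) [m hm /set2_eqE] := hin 0 (ltac:(rewrite st; lia)).
rewrite -/L; case=> [[A B]|[A B]].
  have F := ce_forward us ut st hin hm A B.
  exists m => //; left; apply: (eq_from_nth (x0 := x0)); first by rewrite size_rot.
  move=> j hj; have hj' : j < L by rewrite -st.
  by rewrite F // nth_rotE ?(ltnW hm) // addnC.
set r := rev s.
have ur : uniq r by rewrite rev_uniq.
have sr : size r = L by rewrite size_rev.
have hin' : forall j, j.+1 < size t -> [set nth x0 t j; nth x0 t j.+1] \in cycle_edges r.
  by move=> j hj; rewrite ce_rev; apply: hin.
set a := L - ((m + 1) %% L).+1.
have ha : a < size r by rewrite sr /a; lia.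
have hm1 : (m + 1) %% L < L by rewrite ltn_mod; lia.
have A' : nth x0 t 0 = nth x0 r a.
  rewrite A nth_rev -/L; last by rewrite /a; lia.
  congr nth; rewrite /a; lia.
have B' : nth x0 t 1 = nth x0 r ((a + 1) %% size r).
  rewrite B nth_rev sr ?ltn_mod //.
  congr nth; rewrite -/L.
  have [hlt|heq] : m.+1 < L \/ m.+1 = L by lia.
    rewrite /a (modn_small (m:=m+1)); last lia.
    rewrite modn_small; lia.
  rewrite /a; have -> : m + 1 = L by lia.
  rewrite modnn; have -> : L - 1 + 1 = L by lia.
  rewrite modnn; lia.
have st' : size t = size r by rewrite sr.
have F := ce_forward ur ut st' hin' ha A' B'.
exists a; first by rewrite -sr.
right; apply: (eq_from_nth (x0 := x0)); first by rewrite size_rot.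
move=> j hj; have hj' : j < size r by rewrite -st'.
have ha' : a <= size r by apply: ltnW.
by rewrite F // nth_rotE // addnC.
Qed.
End Fiber.

Section Count.
Variable G : graph.

Lemma gsym : @gadj G =2 (fun z => (@gadj G)^~ z).
Proof. by move=> x y; rewrite /= gadj_sym. Qed.

Lemma ps_sorted (u : seq G) : u != [::] ->
  (if u is x :: p then path (@gadj G) x p else false) = sorted (@gadj G) u.
Proof. by case: u. Qed.

Lemma card_paths_eq L : 0 < L ->
  #|[pred t : L.+1.-tuple G | is_path_seq L t]| = 2 * count_paths G L.
Proof.
move=> L0; rewrite /count_paths.
set P := [pred t : L.+1.-tuple G | is_path_seq L t].
rewrite -[X in X = _]sum1_card (partition_big_imset (fun s : L.+1.-tuple G => path_edges (val s))) /=.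
rewrite mulnC -sum_nat_const; apply: eq_bigr => E /imsetP [s sP ->].
rewrite sum1dep_card cardsE.
set rs := [tuple of rev s].
have sz (u : L.+1.-tuple G) : size u = L.+1 by rewrite size_tuple.
have Pu (u : L.+1.-tuple G) : u \in P -> uniq u.
  by rewrite inE /is_path_seq => /and4P [].
have rsP : rs \in P.
  move: sP; rewrite !inE /is_path_seq /= size_rev rev_uniq => /and4P [-> -> -> h].
  rewrite ps_sorted; last by rewrite -size_eq0 size_rev sz.
  rewrite ps_sorted in h; last by rewrite -size_eq0 sz.
  by rewrite rev_sorted -(eq_sorted gsym).
have neq : s != rs.
  apply/eqP => Est.
  have := congr1 (fun u : L.+1.-tuple G => nth (thead s) (val u) 0) Est; rewrite /=.
  rewrite nth_rev sz // subn1 /=; move/(@nth_inj _ _ _ _ _ (Pu _ sP)).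
  by rewrite sz => /(_ isT (ltnSn L)) h; move: L0; rewrite -h.
transitivity #|pred2 s rs|; last by rewrite card2 neq.
apply: eq_card => t; rewrite !inE.
apply/andP/orP.
  case=> tP /eqP Ets.
  have [] := pe_fiber (s := val s) (t := val t); rewrite ?sz //; try exact: Pu.
    by move=> /val_inj ->; left; rewrite eqxx.
  by move=> h; right; apply/eqP; apply: val_inj.
case=> /eqP ->; split => //.
by rewrite /= pe_rev.
Qed.

Lemma mod1E a L : a < L -> (1 + a) %% L = if a.+1 == L then 0 else a.+1.
Proof.
move=> h; case: eqP => [<-|ne]; first by rewrite add1n modnn.
by rewrite add1n modn_small //; lia.
Qed.

Definition cidx L j (a : nat) (b : bool) :=
  if b then (j + a) %% L else L - ((j + a) %% L).+1.

Lemma cidx_inj L a b a' b' : 2 < L -> a < L -> a' < L ->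
  cidx L 0 a b = cidx L 0 a' b' -> cidx L 1 a b = cidx L 1 a' b' -> a = a' /\ b = b'.
Proof.
move=> L2 ha ha'; rewrite /cidx !add0n !(modn_small ha) !(modn_small ha') !mod1E //.
by case: b; case: b'; do 2 case: eqP; move=> *; split => //; lia.
Qed.

Lemma card_cycles_eq L : 2 < L ->
  #|[pred t : L.-tuple G | is_cycle_seq L t]| = (L * 2) * count_cycles G L.
Proof.
move=> L2; rewrite /count_cycles.
set P := [pred t : L.-tuple G | is_cycle_seq L t].
rewrite -[X in X = _]sum1_card (partition_big_imset (fun s : L.-tuple G => cycle_edges (val s))) /=.
rewrite mulnC -sum_nat_const; apply: eq_bigr => E /imsetP [s sP ->].
rewrite sum1dep_card cardsE.
have sz (u : L.-tuple G) : size u = L by rewrite size_tuple.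
have Pu (u : L.-tuple G) : u \in P -> uniq u.
  by rewrite inE /is_cycle_seq => /and4P [].
have us := Pu _ sP.
have cs : cycle (@gadj G) s by move: sP; rewrite inE => /and4P [].
pose g (ab : 'I_L * bool) : L.-tuple G :=
  if ab.2 then [tuple of rot ab.1 s] else [tuple of rot ab.1 (rev s)].
have L0 : 0 < L by lia.
pose x0 := tnth s (Ordinal L0).
have hs : size s = L := sz s.
have gnth (ab : 'I_L * bool) j : j < L -> nth x0 (g ab) j = nth x0 s (cidx L j ab.1 ab.2).
  case: ab => a b hj /=; have ha := ltn_ord a.
  have hjs : j < size s by rewrite hs.
  have has : a <= size s by rewrite hs ltnW.
  rewrite /g /cidx; case: b => /=.
    by rewrite nth_rotE // hs addnC.
  rewrite nth_rotE ?size_rev // nth_rev ?size_rev hs ?ltn_mod //.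
have cidxL (ab : 'I_L * bool) j : cidx L j ab.1 ab.2 < L.
  by rewrite /cidx; case: ab.2; [rewrite ltn_mod | lia].
have ginj : injective g.
  move=> [a b] [a' b'] Eg.
  have E0 := congr1 (fun u : L.-tuple G => nth x0 (val u) 0) Eg.
  have E1 := congr1 (fun u : L.-tuple G => nth x0 (val u) 1) Eg.
  move: E0 E1; rewrite /= !gnth //; try lia.
  move=> /(@nth_inj _ _ _ _ _ us); rewrite hs => /(_ (cidxL (a, b) 0) (cidxL (a', b') 0)) e0.
  move=> /(@nth_inj _ _ _ _ _ us); rewrite hs => /(_ (cidxL (a, b) 1) (cidxL (a', b') 1)) e1.
  have [eaa ebb] := cidx_inj L2 (ltn_ord a) (ltn_ord a') e0 e1.
  by move: ebb => /= ->; congr pair; apply: val_inj.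
transitivity #|g @: [set: 'I_L * bool]|; last first.
  by rewrite card_imset // cardsT card_prod card_ord card_bool.
apply: eq_card => t; rewrite [LHS]unfold_in /=; apply/andP/imsetP.
  case=> tP /eqP Ets.
  have := ce_fiber (s := val s) (t := val t); rewrite !sz => /(_ L2 erefl us (Pu _ tP) Ets).
  case=> a ha [h|h].
    by exists (Ordinal ha, true); [rewrite in_setT | apply: val_inj].
  by exists (Ordinal ha, false); [rewrite in_setT | apply: val_inj].
case=> [[a b] _ ->]; have ha : a <= size s by rewrite hs ltnW.
have har : a <= size (rev s) by rewrite size_rev.
rewrite inE /is_cycle_seq; case: b => /=.
  rewrite size_rot hs rot_uniq us rot_cycle cs ce_rot //.
  by rewrite L2 eqxx.
rewrite size_rot size_rev hs rot_uniq rev_uniq us rot_cycle rev_cycle -(eq_cycle gsym) cs.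
by rewrite ce_rot // ce_rev L2 eqxx.
Qed.
End Count.

Section DFS.
Variables (T : finType) (vs : seq T) (e : rel T) (nb : T -> seq T)
  (mm : T -> seq T -> bool) (F : seq T -> bool) (Frev : seq T -> bool).
Hypotheses (vs_uniq : uniq vs) (vs_all : forall x, x \in vs)
  (nbE : forall x, nb x = filter (e x) vs) (mmE : forall y p, mm y p = (y \in p))
  (FrevE : forall p, Frev p = F (rev p)).

Definition valid (s : seq T) := uniq s && sorted e s.

Fixpoint allseqs n : seq (seq T) :=
  if n is n'.+1 then flatten [seq [seq x :: q | q <- allseqs n'] | x <- vs] else [:: [::]].

Definition cands (p : seq T) := if p is x :: _ then nb x else vs.

Fixpoint cdfs k (p : seq T) : nat :=
  if k is k'.+1 then sumn [seq cdfs k' (y :: p) | y <- cands p & ~~ mm y p] else Frev p.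

Lemma sorted_cat_l (r q : seq T) : sorted e (r ++ q) -> sorted e r.
Proof. by case: r => //= x r; rewrite cat_path => /andP []. Qed.

Lemma valid_prefix r q : valid (r ++ q) -> valid r.
Proof. by rewrite /valid cat_uniq => /andP [/andP [-> _]] /sorted_cat_l. Qed.

Lemma sorted_rcons2 (r : seq T) x y :
  sorted e (rcons (rcons r x) y) = sorted e (rcons r x) && e x y.
Proof.
case: r => [|h t] /=; first by rewrite andbT.
by rewrite rcons_path last_rcons.
Qed.

Lemma valid_ext p y : valid (rev p) ->
  valid (rcons (rev p) y) = (y \notin p) && (if p is x :: _ then e x y else true).
Proof.
rewrite /valid rcons_uniq mem_rev => /andP [-> sp]; rewrite andbT; congr andb.
case: p sp => [|x p] //=; rewrite rev_cons => sp.
by rewrite sorted_rcons2 sp.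
Qed.

Lemma sumn_filter (f : T -> nat) (P : pred T) l :
  sumn [seq f y | y <- l & P y] = sumn [seq (if P y then f y else 0) | y <- l].
Proof. by elim: l => //= y l IH; case: (P y) => /=; rewrite IH. Qed.

Lemma count_flatten_map (P : pred (seq T)) (A : seq (seq T)) :
  count P (flatten [seq [seq x :: q | q <- A] | x <- vs]) =
  sumn [seq count (fun q => P (x :: q)) A | x <- vs].
Proof.
elim: vs => //= x l IH; by rewrite count_cat IH count_map.
Qed.

Lemma cdfsE k p : valid (rev p) ->
  cdfs k p = count (fun q => valid (rev p ++ q) && F (rev p ++ q)) (allseqs k).
Proof.
elim: k p => [|k IH] p vp /=.
  by rewrite FrevE cats0 vp addn0.
rewrite count_flatten_map.
pose C y := (y \notin p) && (if p is x :: _ then e x y else true).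
have -> : sumn [seq cdfs k (y :: p) | y <- cands p & ~~ mm y p] =
          sumn [seq (if C y then cdfs k (y :: p) else 0) | y <- vs].
  rewrite sumn_filter /C; clear C; case: p vp => [|x p] vp /=.
    by congr sumn; apply: eq_map => y; rewrite mmE in_nil.
  rewrite nbE sumn_filter; congr sumn; apply: eq_map => y /=.
  by rewrite mmE; case: (e x y); case: (y \in _).
congr sumn; apply: eq_map => y.
have vy := valid_ext y vp; rewrite -/(C y) in vy.
case: ifP => Cy.
  rewrite IH; last by rewrite rev_cons vy.
  by apply: eq_count => q; rewrite rev_cons cat_rcons.
rewrite (@eq_count _ _ pred0) ?count_pred0 // => q /=.
apply/negP => /andP [hv _]; move: hv; rewrite -cat1s catA cats1 => /valid_prefix.
by rewrite vy Cy.
Qed.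

Lemma mem_allseqs n s : (s \in allseqs n) = (size s == n).
Proof.
elim: n s => [|n IH] s /=; first by case: s => [|x s]; rewrite inE.
case: s => [|x s].
  by apply/flattenP => [[A /mapP [y _ ->] /mapP [q _]]].
apply/flattenP/idP => [[A /mapP [y _ ->] /mapP [q qin [_ ->]]]|hs].
  by rewrite /= eqSS -IH.
exists [seq x :: q | q <- allseqs n]; first by apply: map_f; apply: vs_all.
by apply: map_f; rewrite IH; move: hs; rewrite /= eqSS.
Qed.

Lemma uniq_allseqs n : uniq (allseqs n).
Proof.
elim: n => //= n IH.
elim: vs vs_uniq => //= x l IHl /andP [xl ul].
rewrite cat_uniq map_inj_uniq ?IH; last by move=> ? ? [].
rewrite IHl // andbT; apply/hasPn => s /flattenP [A /mapP [y yl ->] /mapP [q _ ->]].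
apply/mapP => [[q' _ [exy _]]]; by move: xl; rewrite -exy yl.
Qed.

Lemma card_tuples n (Q : pred (seq T)) :
  #|[pred t : n.-tuple T | Q t]| = count Q (allseqs n).
Proof.
rewrite cardE /enum_mem size_filter.
have -> : count (mem [pred t : n.-tuple T | Q t]) (Finite.enum (n.-tuple T)) =
          count Q (map val (Finite.enum (n.-tuple T))) by rewrite count_map.
apply/permP/uniq_perm.
  rewrite map_inj_uniq; last exact: val_inj.
  by rewrite -enumT enum_uniq.
  exact: uniq_allseqs.
move=> s; rewrite mem_allseqs; apply/mapP/idP => [[t _ ->]|hs].
  by rewrite size_tuple.
by exists (Tuple hs); rewrite ?enumT ?mem_enum.
Qed.

Lemma count_dfs n : cdfs n [::] = #|[pred t : n.-tuple T | valid t && F t]|.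
Proof. by rewrite (card_tuples n (fun s => valid s && F s)) cdfsE. Qed.
End DFS.

Inductive V16 : Type := v0 | v1 | v2 | v3 | v4 | v5 | v6 | v7 | v8 | v9 | v10 | v11 | v12 | v13 | v14 | v15.
Definition V2n (x : V16) : nat := match x with v0 => 0 | v1 => 1 | v2 => 2 | v3 => 3 | v4 => 4 | v5 => 5 | v6 => 6 | v7 => 7 | v8 => 8 | v9 => 9 | v10 => 10 | v11 => 11 | v12 => 12 | v13 => 13 | v14 => 14 | v15 => 15 end.
Definition n2V (n : nat) : option V16 := match n with 0 => Some v0 | 1 => Some v1 | 2 => Some v2 | 3 => Some v3 | 4 => Some v4 | 5 => Some v5 | 6 => Some v6 | 7 => Some v7 | 8 => Some v8 | 9 => Some v9 | 10 => Some v10 | 11 => Some v11 | 12 => Some v12 | 13 => Some v13 | 14 => Some v14 | 15 => Some v15 | _ => None end.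
Lemma V2nK : pcancel V2n n2V. Proof. by case. Qed.
HB.instance Definition _ := Countable.copy V16 (pcan_type V2nK).
Definition vs16 : seq V16 := [:: v0; v1; v2; v3; v4; v5; v6; v7; v8; v9; v10; v11; v12; v13; v14; v15].
Lemma vs16P : Finite.axiom vs16. Proof. by case. Qed.
HB.instance Definition _ := isFinite.Build V16 vs16P.
Definition eqV (x y : V16) : bool := match x, y with v0, v0 => true | v1, v1 => true | v2, v2 => true | v3, v3 => true | v4, v4 => true | v5, v5 => true | v6, v6 => true | v7, v7 => true | v8, v8 => true | v9, v9 => true | v10, v10 => true | v11, v11 => true | v12, v12 => true | v13, v13 => true | v14, v14 => true | v15, v15 => true | _, _ => false end.
Lemma eqVE x y : eqV x y = (x == y). Proof. by case: x; case: y. Qed.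
Definition nb_rook (x : V16) : seq V16 :=
  match x with
  | v0 => [:: v1; v2; v3; v4; v8; v12]
  | v1 => [:: v0; v2; v3; v5; v9; v13]
  | v2 => [:: v0; v1; v3; v6; v10; v14]
  | v3 => [:: v0; v1; v2; v7; v11; v15]
  | v4 => [:: v0; v5; v6; v7; v8; v12]
  | v5 => [:: v1; v4; v6; v7; v9; v13]
  | v6 => [:: v2; v4; v5; v7; v10; v14]
  | v7 => [:: v3; v4; v5; v6; v11; v15]
  | v8 => [:: v0; v4; v9; v10; v11; v12]
  | v9 => [:: v1; v5; v8; v10; v11; v13]
  | v10 => [:: v2; v6; v8; v9; v11; v14]
  | v11 => [:: v3; v7; v8; v9; v10; v15]
  | v12 => [:: v0; v4; v8; v13; v14; v15]
  | v13 => [:: v1; v5; v9; v12; v14; v15]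
  | v14 => [:: v2; v6; v10; v12; v13; v15]
  | v15 => [:: v3; v7; v11; v12; v13; v14]
  end.
Definition nb_shri (x : V16) : seq V16 :=
  match x with
  | v0 => [:: v1; v3; v4; v5; v12; v15]
  | v1 => [:: v0; v2; v5; v6; v12; v13]
  | v2 => [:: v1; v3; v6; v7; v13; v14]
  | v3 => [:: v0; v2; v4; v7; v14; v15]
  | v4 => [:: v0; v3; v5; v7; v8; v9]
  | v5 => [:: v0; v1; v4; v6; v9; v10]
  | v6 => [:: v1; v2; v5; v7; v10; v11]
  | v7 => [:: v2; v3; v4; v6; v8; v11]
  | v8 => [:: v4; v7; v9; v11; v12; v13]
  | v9 => [:: v4; v5; v8; v10; v13; v14]
  | v10 => [:: v5; v6; v9; v11; v14; v15]
  | v11 => [:: v6; v7; v8; v10; v12; v15]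
  | v12 => [:: v0; v1; v8; v11; v13; v15]
  | v13 => [:: v1; v2; v8; v9; v12; v14]
  | v14 => [:: v2; v3; v9; v10; v13; v15]
  | v15 => [:: v0; v3; v10; v11; v12; v14]
  end.


Section MPNNPart.
Import GRing.Theory.
Local Open Scope ring_scope.
Definition typ (G : graph) (i j : G) : nat :=
  if i == j then 0 else if gadj i j then 1 else 2.

Definition Ncnt (a b : nat) : nat :=
  match a, b with
  | 0, 1 => 6 | 1, 0 => 1 | 1, 1 => 2 | 1, 2 => 3 | 2, 1 => 2 | 2, 2 => 4
  | _, _ => 0 end.
Definition Ccnt (b : nat) : nat :=
  match b with 0 => 1 | 1 => 6 | 2 => 9 | _ => 0 end.
Definition W (K a : nat) : bool := [|| a == 0, (0 < K)%N && (a == 1) | (1 < K)%N].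

Lemma typ_lt3 (G : graph) (i j : G) : (typ i j < 3)%N.
Proof. by rewrite /typ; case: (i == j) => //; case: (gadj i j). Qed.

Lemma cnt_enum (T : finType) (P : pred T) : count P (enum T) = #|[pred x | P x]|.
Proof.
rewrite cardE /enum_mem size_filter count_filter; apply: eq_count => x.
by rewrite !inE andbT.
Qed.

Section Graph.
Variable G : graph.
Hypothesis Hcard : #|G| = 16%N.
Hypothesis Hn : forall (i j : G) b, (b < 3)%N ->
  #|[pred k | gadj j k && (typ i k == b)]| = Ncnt (typ i j) b.
Hypothesis Hc : forall (i : G) b, (b < 3)%N -> #|[pred j | typ i j == b]| = Ccnt b.

Lemma typ0 (i j : G) : (typ i j == 0%N) = (i == j).
Proof. by rewrite /typ; case: (i == j) => //; case: (gadj i j). Qed.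

Lemma within_mono n d (i j : G) : within n i j -> within (n + d) i j.
Proof. by elim: d => [|d IH]; rewrite ?addn0 // addnS /= => /IH ->. Qed.

Lemma withinS n (i j : G) :
  within n.+1 i j = within n i j || [exists k, within n i k && gadj k j].
Proof. by []. Qed.

Lemma within1 (i j : G) : within 1 i j = (i == j) || gadj i j.
Proof.
rewrite /=; congr orb; apply/existsP/idP => [[k /andP [/eqP -> ->]] //|h].
by exists i; rewrite eqxx.
Qed.

Lemma within2 (i j : G) : within 2 i j.
Proof.
rewrite withinS within1.
case: (boolP ((i == j) || gadj i j)) => //= h.
have t2 : typ i j = 2%N by move: h; rewrite /typ; case: (i == j); case: (gadj i j).
have := Hn i j (isT : (1 < 3)%N); rewrite t2 /= => c.
have : (0 < #|[pred k | gadj j k && (typ i k == 1%N)]|)%N by rewrite c.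
case/card_gt0P => k; rewrite inE => /andP [ajk tik].
apply/existsP; exists k; change (within 1 i k && gadj k j).
rewrite within1 [gadj k j]gadj_sym ajk andbT.
by move: tik; rewrite /typ; case: (i == k) => //; case: (gadj i k) => //; rewrite orbT.
Qed.

Lemma withinE n (i j : G) : within n i j = W n (typ i j).
Proof.
case: n => [|[|n]].
- by rewrite /= -typ0 /W /=; case: (typ i j == 0%N).
- rewrite within1 /W /typ; case: (i == j) => //=; by case: (gadj i j).
- have := within_mono n (within2 i j); rewrite add2n => ->.
  by rewrite /W !orbT.
Qed.

Lemma spdE (i j : G) : spd i j = Some (typ i j).
Proof.
rewrite /spd Hcard (eq_find (a2 := fun n => W n (typ i j))); last by move=> n; rewrite withinE.
have := typ_lt3 i j; case: (typ i j) => [|[|[|]]] //.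
Qed.

Variables (R : realType) (m : mpnn R).

Definition ins (a : nat) : bool :=
  match rule m with NodeDeletion => a != 0%N | EgoNet K => W K a end.

Lemma in_subE (i j : G) : in_sub m i j = ins (typ i j).
Proof. by rewrite /in_sub /ins; case: (rule m) => [|K]; rewrite ?withinE // typ0 eq_sym. Qed.

Definition zl (a : nat) : 'rV[R]_(labdim (lab m)) :=
  match lab m as l return 'rV[R]_(labdim l) with
  | NoLabel => 0
  | IdLabel => const_mx (if a == 0%N then 1 else 0)
  | SpdLabel => const_mx (a%:R)
  end.

Definition ncnt (a b : nat) : nat := if ins a && ins b then Ncnt a b else 0%N.

Fixpoint hs (t : nat) : nat -> 'rV[R]_(sdim (lab m) (edim m) t) :=
  match t as t0 return nat -> 'rV[R]_(sdim (lab m) (edim m) t0) with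
  | 0%N => fun a => zl a
  | t'.+1 => fun a =>
      @Upd R m t' (hs t' a) (\sum_(b < 3) (@Msg R m t' (hs t' a) (hs t' b)) *+ ncnt a b)
  end.

Lemma zlabelE (i j : G) : zlabel m i j = zl (typ i j).
Proof.
rewrite /zlabel /zl spdE; case: (lab m) => //.
by rewrite typ0.
Qed.

Lemma sum_typ (V : nmodType) (i : G) (P : pred G) (F : nat -> V) :
  \sum_(k | P k) F (typ i k) = \sum_(b < 3) F b *+ #|[pred k | P k && (typ i k == b)]|.
Proof.
rewrite (partition_big (fun k => Ordinal (typ_lt3 i k)) xpredT) //=.
apply: eq_bigr => b _; rewrite -sumr_const; apply: eq_big => k.
  by rewrite !inE.
by case/andP => _ /eqP <-.
Qed.

Lemma cnt_sub (i j : G) b : (b < 3)%N ->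
  #|[pred k | sub_nbr m i j k && (typ i k == b)]| = ncnt (typ i j) b.
Proof.
move=> hb; rewrite /ncnt /sub_nbr.
case Hab: (ins (typ i j) && ins b).
  rewrite -Hn //; apply: eq_card => k; rewrite !inE !in_subE.
  case/andP: Hab => -> hib /=.
  by case: (typ i k =P b) => [->|_]; rewrite ?hib ?andbF.
apply: eq_card0 => k; rewrite !inE !in_subE.
case: (typ i k =P b) => [->|_]; last by rewrite andbF.
by move: Hab; case: (ins (typ i j)); case: (ins b).
Qed.

Lemma hstateE t (i j : G) : hstate m t i j = hs t (typ i j).
Proof.
elim: t j => [|t IH] j /=; first exact: zlabelE.
rewrite IH; congr (Upd _ _).
under eq_bigr => k _ do rewrite IH.
rewrite (sum_typ i (sub_nbr m i j) (fun b => Msg (hs t (typ i j)) (hs t b))).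
by apply: eq_bigr => b _; rewrite cnt_sub.
Qed.

Definition base : seq nat := [:: 0; 1; 1; 1; 1; 1; 1; 2; 2; 2; 2; 2; 2; 2; 2; 2]%N.
Definition L0 := filter ins base.
Definition HN := @Rnode R m (map (hs (nlayers m)) L0).

Lemma cnt_enumA (T : finType) (A : pred T) (P : pred T) :
  count P (enum A) = #|[pred x | A x && P x]|.
Proof.
rewrite cardE /enum_mem size_filter !count_filter; apply: eq_count => x.
by rewrite !inE andbC.
Qed.

Lemma count_L0 x : count_mem x L0 = if ins x then Ccnt x else 0%N.
Proof.
rewrite /L0 count_filter.
case: (boolP (ins x)) => h.
  rewrite (@eq_count _ _ (pred1 x)); last first.
    by move=> y /=; case: eqP => [->|]; rewrite ?h ?andbF.
  by case: x h => [|[|[|x]]].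
rewrite (@eq_count _ _ pred0) ?count_pred0 // => y /=; case: eqP => [->|]; by rewrite ?(negbTE h) ?andbF.
Qed.

Lemma hnodeE (i : G) : hnode m i = HN.
Proof.
rewrite /hnode /HN.
under eq_map => j do rewrite hstateE.
rewrite (map_comp (hs (nlayers m)) (typ i)).
apply: Rnode_multiset; apply: perm_map.
rewrite /perm_eq; apply/allP => x _ /=; apply/eqP.
rewrite count_L0 count_map cnt_enumA.
case: (ltnP x 3) => hx; last first.
  have -> : Ccnt x = 0%N by case: x hx => [|[|[|x]]].
  rewrite if_same; apply: eq_card0 => j; rewrite !inE.
  by case: (typ i j =P x) => [e|_]; rewrite ?andbF //; move: (typ_lt3 i j); rewrite e ltnNge hx.
case: (boolP (ins x)) => h.
  rewrite -(Hc i hx); apply: eq_card => j; rewrite !inE in_subE.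
  by case: (typ i j =P x) => [->|_]; rewrite ?h ?andbF.
apply: eq_card0 => j; rewrite !inE in_subE.
by case: (typ i j =P x) => [->|_]; rewrite ?(negbTE h) ?andbF.
Qed.

Lemma hgraphE : hgraph m G = @Rgraph R m [seq HN | _ <- enum G].
Proof. by rewrite /hgraph; congr Rgraph; apply: eq_map => i; rewrite hnodeE. Qed.

End Graph.

End MPNNPart.

Fixpoint memn (y : V16) (p : seq V16) : bool :=
  if p is z :: p' then eqV z y || memn y p' else false.

Lemma memnE y p : memn y p = (y \in p).
Proof.
elim: p => //= z p ->; rewrite inE; congr orb.
by rewrite eqVE eq_sym.
Qed.

Lemma vs_all (x : V16) : x \in vs16.
Proof. by case: x. Qed.

Lemma vs_uniq : uniq vs16.
Proof. by []. Qed.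

Lemma card_vs (P : pred V16) : #|[pred x | P x]| = count P vs16.
Proof.
rewrite -cnt_enum; apply/permP/uniq_perm; rewrite ?enum_uniq ?vs_uniq //.
by move=> x; rewrite mem_enum vs_all.
Qed.

Definition adjR (x y : V16) := memn y (nb_rook x).
Definition adjS (x y : V16) := memn y (nb_shri x).

Definition chk (adj : rel V16) (nb : V16 -> seq V16) :=
  all (fun x => (nb x == filter (adj x) vs16) && ~~ adj x x &&
                all (fun y => adj x y == adj y x) vs16) vs16.

Lemma chkR : chk adjR nb_rook. Proof. by vm_compute. Qed.
Lemma chkS : chk adjS nb_shri. Proof. by vm_compute. Qed.

Section Mk.
Variables (adj : rel V16) (nb : V16 -> seq V16).
Hypothesis H : chk adj nb.
Lemma chk_nb x : nb x = filter (adj x) vs16.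
Proof. by have /andP [/andP [/eqP -> _] _] := allP H x (vs_all x). Qed.
Lemma chk_sym : symmetric adj.
Proof. move=> x y; have /andP [_ /allP /(_ y (vs_all y)) /eqP] := allP H x (vs_all x); done. Qed.
Lemma chk_irr : irreflexive adj.
Proof. by move=> x; have /andP [/andP [_ /negbTE ->] _] := allP H x (vs_all x). Qed.
End Mk.

Definition Grook : graph := @Graph V16 adjR (chk_sym chkR) (chk_irr chkR).
Definition Gshri : graph := @Graph V16 adjS (chk_sym chkS) (chk_irr chkS).



Lemma card16R : #|Grook| = 16.
Proof. by rewrite cardT enumT unlock. Qed.
Lemma card16S : #|Gshri| = 16.
Proof. by rewrite cardT enumT unlock. Qed.

Definition chkN (G : graph) (adj : rel V16) (tp : V16 -> V16 -> nat) :=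
  all (fun i => all (fun j => all (fun b =>
    count (fun k => adj j k && (tp i k == b)) vs16 == Ncnt (tp i j) b) [:: 0; 1; 2]) vs16) vs16.
Definition chkC (tp : V16 -> V16 -> nat) :=
  all (fun i => all (fun b => count (fun j => tp i j == b) vs16 == Ccnt b) [:: 0; 1; 2]) vs16.

Lemma chkNR : chkN Grook adjR (@typ Grook). Proof. by vm_compute. Qed.
Lemma chkNS : chkN Gshri adjS (@typ Gshri). Proof. by vm_compute. Qed.
Lemma chkCR : chkC (@typ Grook). Proof. by vm_compute. Qed.
Lemma chkCS : chkC (@typ Gshri). Proof. by vm_compute. Qed.

Lemma b3 b : b < 3 -> b \in [:: 0; 1; 2].
Proof. by case: b => [|[|[|]]]. Qed.

Lemma HnR (i j : Grook) b : b < 3 ->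
  #|[pred k | gadj j k && (typ i k == b)]| = Ncnt (typ i j) b.
Proof.
move=> hb; rewrite card_vs; apply/eqP.
exact: (allP (allP (allP chkNR i (vs_all i)) j (vs_all j)) b (b3 hb)).
Qed.
Lemma HnS (i j : Gshri) b : b < 3 ->
  #|[pred k | gadj j k && (typ i k == b)]| = Ncnt (typ i j) b.
Proof.
move=> hb; rewrite card_vs; apply/eqP.
exact: (allP (allP (allP chkNS i (vs_all i)) j (vs_all j)) b (b3 hb)).
Qed.
Lemma HcR (i : Grook) b : b < 3 -> #|[pred j | typ i j == b]| = Ccnt b.
Proof.
move=> hb; rewrite card_vs; apply/eqP.
exact: (allP (allP chkCR i (vs_all i)) b (b3 hb)).
Qed.
Lemma HcS (i : Gshri) b : b < 3 -> #|[pred j | typ i j == b]| = Ccnt b.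
Proof.
move=> hb; rewrite card_vs; apply/eqP.
exact: (allP (allP chkCS i (vs_all i)) b (b3 hb)).
Qed.

Lemma hgraph_eq (R : realType) (m : mpnn R) : hgraph m Grook = hgraph m Gshri.
Proof.
by rewrite (hgraphE card16R HnR HcR) (hgraphE card16S HnS HcS).
Qed.

Definition FrevC (adj : rel V16) (p : seq V16) := if p is y :: p' then adj y (last y p') else true.
Definition Fcyc (adj : rel V16) (s : seq V16) := if s is x :: p then adj (last x p) x else true.

Lemma FrevCE adj p : FrevC adj p = Fcyc adj (rev p).
Proof.
case: p => [|y p] //=; rewrite rev_cons.
case/lastP: p => [|r z] //=.
by rewrite last_rcons rev_rcons /= last_rcons.
Qed.

Lemma cyc_predE (adj : rel V16) (s : seq V16) : size s = 8 ->
  (valid adj s && Fcyc adj s) = [&& 3 <= 8, size s == 8, uniq s & cycle adj s].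
Proof.
move=> hs; rewrite /valid hs /=.
case: s hs => [|x p] //= _.
by rewrite rcons_path andbA.
Qed.

Lemma path_predE (adj : rel V16) (s : seq V16) : size s = 9 ->
  (valid adj s && true) = [&& 1 <= 8, size s == 9, uniq s &
      (if s is x :: p then path adj x p else false)].
Proof.
move=> hs; rewrite /valid hs /= andbT.
by case: s hs => [|x p].
Qed.

Lemma cycR : cdfs vs16 nb_rook memn (FrevC adjR) 8 [::] = 16 * count_cycles Grook 8.
Proof.
rewrite (count_dfs (e:=adjR) (F:=Fcyc adjR) vs_uniq vs_all (chk_nb chkR) memnE (FrevCE adjR)).
rewrite -(@card_cycles_eq Grook 8) //.
by apply: eq_card => t; rewrite !inE (cyc_predE _ (size_tuple t)).
Qed.

Lemma cycS : cdfs vs16 nb_shri memn (FrevC adjS) 8 [::] = 16 * count_cycles Gshri 8.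
Proof.
rewrite (count_dfs (e:=adjS) (F:=Fcyc adjS) vs_uniq vs_all (chk_nb chkS) memnE (FrevCE adjS)).
rewrite -(@card_cycles_eq Gshri 8) //.
by apply: eq_card => t; rewrite !inE (cyc_predE _ (size_tuple t)).
Qed.

Lemma pathR : cdfs vs16 nb_rook memn (fun _ => true) 9 [::] = 2 * count_paths Grook 8.
Proof.
rewrite (count_dfs (e:=adjR) (F:=fun _ => true) vs_uniq vs_all (chk_nb chkR) memnE (fun _ => erefl)).
rewrite -(@card_paths_eq Grook 8) //.
by apply: eq_card => t; rewrite !inE (path_predE _ (size_tuple t)).
Qed.

Lemma pathS : cdfs vs16 nb_shri memn (fun _ => true) 9 [::] = 2 * count_paths Gshri 8.
Proof.
rewrite (count_dfs (e:=adjS) (F:=fun _ => true) vs_uniq vs_all (chk_nb chkS) memnE (fun _ => erefl)).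
rewrite -(@card_paths_eq Gshri 8) //.
by apply: eq_card => t; rewrite !inE (path_predE _ (size_tuple t)).
Qed.

Lemma cyc_neq : cdfs vs16 nb_rook memn (FrevC adjR) 8 [::] != cdfs vs16 nb_shri memn (FrevC adjS) 8 [::].
Proof. vm_cast_no_check (erefl true). Qed.

Lemma path_neq : cdfs vs16 nb_rook memn (fun _ => true) 9 [::] != cdfs vs16 nb_shri memn (fun _ => true) 9 [::].
Proof. vm_cast_no_check (erefl true). Qed.

Theorem proposition1 :
  (exists G1 G2 : graph,
      count_cycles G1 8 <> count_cycles G2 8 /\
      forall (R : realType) (m : mpnn R), valid_mpnn m ->
        hgraph m G1 = hgraph m G2) /\
  (exists G1 G2 : graph,
      count_paths G1 8 <> count_paths G2 8 /\
      forall (R : realType) (m : mpnn R), valid_mpnn m ->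
        hgraph m G1 = hgraph m G2).
Proof.
split.
  exists Grook, Gshri; split; last by move=> R m _; exact: hgraph_eq.
  by move=> E; move: cyc_neq; rewrite cycR cycS E eqxx.
exists Grook, Gshri; split; last by move=> R m _; exact: hgraph_eq.
by move=> E; move: path_neq; rewrite pathR pathS E eqxx.
Qed.
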